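(* For every $x>1$, $1-[R^-(x)]^2<[R^+(x)]^2-1$. Consequently, for every $c>1$ and every $\sin^{-1}(\frac1c)\le\psi_1<\psi_2\le\pi-\sin^{-1}(\frac1c)$, \[\int_{\psi_1}^{\psi_2}\frac{d\psi}{1-[R^-(c\sin\psi)]^2}>\int_{\psi_1}^{\psi_2}\frac{d\psi}{[R^+(c\sin\psi)]^2-1}.\]
   Context: Let $K(R)=\frac{\exp(\frac{R^2-1}{2})}{R}$ for $R>0$; $K$ is strictly decreasing on $(0,1]$, strictly increasing on $[1,\infty)$ with $K(1)=1$. For $s\ge1$ let $R^-(s)\in(0,1]$ and $R^+(s)\in[1,\infty)$ be the two solutions of $K(R)=s$. *)

(* Defs.v *)
From HB Require Import structures.
From mathcomp Require Import all_boot all_order all_algebra.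
From mathcomp Require Import all_classical all_reals all_analysis.
Set Implicit Arguments. Unset Strict Implicit. Unset Printing Implicit Defensive.
Import Order.TTheory GRing.Theory Num.Theory.
Local Open Scope classical_set_scope.
Local Open Scope ring_scope.

Definition K {R : realType} (r : R) : R := expR ((r ^+ 2 - 1) / 2) / r.

(* R^-(s): the solution in (0,1] of K(R) = s (unique for s >= 1). *)
Definition Rm {R : realType} (s : R) : R :=
  xget 1 [set r : R | 0 < r <= 1 /\ K r = s].

(* R^+(s): the solution in [1,oo) of K(R) = s (unique for s >= 1). *)
Definition Rp {R : realType} (s : R) : R :=
  xget 1 [set r : R | 1 <= r /\ K r = s].

(* Main.v *)
Require Import Defs.
From HB Require Import structures.
From mathcomp Require Import all_boot all_order all_algebra.
From mathcomp Require Import all_classical all_reals all_analysis.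
From mathcomp Require Import ring lra measurable_realfun.
Import Order.TTheory GRing.Theory Num.Theory.
Local Open Scope classical_set_scope.
Local Open Scope ring_scope.

Set Implicit Arguments. Unset Strict Implicit.
Section P1.
Variable R : realType.
Import numFieldNormedType.Exports.
Implicit Types r s t u v x y : R.

Definition fL (u : R) := u - 1 - ln u.

Lemma ln_lt_sub1 y : 0 < y -> y != 1 -> ln y < y - 1.
Proof.
move=> y0 y1; have := @expR_gt1Dx R (ln y).
rewrite lnK ?posrE // => H.
have : ln y != 0 by rewrite ln_eq0.
move=> /H; lra.
Qed.

Lemma ln_le_sub1 y : 0 < y -> ln y <= y - 1.
Proof.
move=> y0; have := @expR_ge1Dx R (ln y); rewrite lnK ?posrE //; lra.
Qed.

Lemma ln_gt_1inv y : 0 < y -> y != 1 -> 1 - y^-1 < ln y.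
Proof.
move=> y0 y1; have := @ln_lt_sub1 y^-1.
rewrite lnV ?posrE // invr_gt0 y0 invr_eq1 y1 => /(_ isT isT); lra.
Qed.

Lemma ln_ge_1inv y : 0 < y -> 1 - y^-1 <= ln y.
Proof.
move=> y0; have := @ln_le_sub1 y^-1.
rewrite lnV ?posrE // invr_gt0 y0 => /(_ isT); lra.
Qed.

Lemma lnK_E r : 0 < r -> ln (K r) = fL (r ^+ 2) / 2.
Proof.
move=> r0; rewrite /K /fL ln_div ?posrE ?expR_gt0 // expRK lnXn //.
rewrite mulr2n; first field. all: by [].
Qed.

Lemma K_gt0 r : 0 < r -> 0 < K r.
Proof. by move=> r0; rewrite /K divr_gt0 // expR_gt0. Qed.


Lemma K_cont (r : R) : 0 < r -> {for r, continuous (@K R)}.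
Proof.
move=> r0.
have -> : @K R = (fun r => expR ((r * r - 1) * 2^-1)) \* (fun r => r^-1).
  by apply/funext => z; rewrite /K /= expr2.
apply: continuousM; last first.
  by apply: continuousV; [rewrite gt_eqF|exact: cvg_id].
apply: (@continuous_comp _ _ _ (fun r => (r * r - 1) * 2^-1) expR); last first.
  exact: continuous_expR.
apply: continuousM; last exact: cst_continuous.
apply: continuousD; last exact: cst_continuous.
by apply: continuousM; exact: cvg_id.
Qed.


Lemma fL_ge0 u : 0 < u -> 0 <= fL u.
Proof. by move=> u0; have := ln_le_sub1 u0; rewrite /fL; lra. Qed.

Lemma fL_gt0 u : 0 < u -> u != 1 -> 0 < fL u.
Proof. by move=> u0 u1; have := ln_lt_sub1 u0 u1; rewrite /fL; lra. Qed.

Lemma fL_incr s t : 1 <= s -> s < t -> fL s < fL t.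
Proof.
move=> s1 st.
have s0 : 0 < s by lra.
have ts0 : 0 < t / s by rewrite divr_gt0 //; lra.
have ts1 : t / s != 1.
  apply/eqP => h; have : t = s by rewrite -[t](divfK (lt0r_neq0 s0)) h mul1r.
  by move=> ets; move: st; rewrite ets ltxx.
have := ln_lt_sub1 ts0 ts1; rewrite ln_div ?posrE //; try lra.
have : t / s - 1 <= t - s.
  rewrite -subr_ge0 (_ : t - s - (t / s - 1) = (t - s) * (1 - s^-1)); last first.
    by field; rewrite gt_eqF.
  rewrite mulr_ge0 // ?subr_ge0; first lra.
  by rewrite invf_le1 //.
by rewrite /fL; lra.
Qed.

Lemma fL_ndecr s t : 1 <= s -> s <= t -> fL s <= fL t.
Proof.
move=> s1; rewrite le_eqVlt => /predU1P[->//|st]; exact/ltW/fL_incr.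
Qed.

Lemma fL_decr s t : 0 < s -> s < t -> t <= 1 -> fL t < fL s.
Proof.
move=> s0 st t1.
have t0 : 0 < t by lra.
have ts0 : 0 < t / s by rewrite divr_gt0.
have ts1 : t / s != 1.
  apply/eqP => h; have : t = s by rewrite -[t](divfK (lt0r_neq0 s0)) h mul1r.
  by move=> ets; move: st; rewrite ets ltxx.
have := ln_gt_1inv ts0 ts1; rewrite ln_div ?posrE // invf_div.
have : t - s <= 1 - s / t.
  rewrite -subr_ge0 (_ : 1 - s / t - (t - s) = (t - s) * (t^-1 - 1)); last first.
    by field; rewrite gt_eqF.
  rewrite mulr_ge0 // ?subr_ge0; first lra.
  by rewrite invf_ge1 //.
by rewrite /fL; lra.
Qed.

Lemma K_lt (s t : R) : 0 < s -> 0 < t -> (K s < K t) = (fL (s ^+ 2) < fL (t ^+ 2)).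
Proof.
move=> s0 t0; rewrite -ltr_ln ?posrE ?K_gt0 // !lnK_E //.
by rewrite ltr_pM2r // invr_gt0.
Qed.

Lemma K_incr s t : 1 <= s -> s < t -> K s < K t.
Proof.
move=> s1 st; rewrite K_lt; try lra.
apply: fL_incr; first by rewrite expr_ge1 //; lra.
by rewrite ltr_pXn2r // ?nnegrE; lra.
Qed.

Lemma K_decr s t : 0 < s -> s < t -> t <= 1 -> K t < K s.
Proof.
move=> s0 st t1; rewrite K_lt; try lra.
apply: fL_decr; first by rewrite exprn_gt0.
  by rewrite ltr_pXn2r // ?nnegrE; lra.
by rewrite expr_le1 //; lra.
Qed.

Lemma K_ge1 r : 0 < r -> 1 <= K r.
Proof.
move=> r0; rewrite -ler_ln ?posrE ?K_gt0 // ln1 lnK_E //.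
by rewrite divr_ge0 // fL_ge0 // exprn_gt0.
Qed.

Lemma K_eq1 r : 0 < r -> K r = 1 -> r = 1.
Proof.
move=> r0 Kr1; apply/eqP; apply/negPn/negP => r1.
have : 0 < ln (K r).
  rewrite lnK_E // divr_gt0 // fL_gt0 ?exprn_gt0 //.
  rewrite sqrf_eq1 negb_or r1 /=; apply/eqP; lra.
by rewrite Kr1 ln1 ltxx.
Qed.


Lemma K1 : K (1 : R) = 1.
Proof. by rewrite /K expr1n subrr mul0r expR0 divr1. Qed.

Lemma K_within a b : 0 < a -> {within `[a, b], continuous (@K R)}.
Proof.
move=> a0; apply: continuous_in_subspaceT => z; rewrite inE /= in_itv /= => /andP[az _].
by apply: K_cont; lra.
Qed.

Lemma Rm_ex x : 1 <= x -> exists r, 0 < r <= 1 /\ K r = x.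
Proof.
move=> x1.
set e := expR (- 2^-1 : R).
have e0 : 0 < e by apply: expR_gt0.
have e1 : e < 1 by rewrite /e expR_lt1 oppr_lt0 invr_gt0.
set r0 := e / x.
have r00 : 0 < r0 by rewrite divr_gt0 //; lra.
have r01 : r0 <= e by rewrite /r0 ler_pdivrMr; [nra|lra].
have Kr0 : x <= K r0.
  rewrite /K ler_pdivlMr // /r0 mulrC divfK; last by rewrite gt_eqF //; lra.
  rewrite /e ler_expR; have : 0 <= r0 ^+ 2 by apply: sqr_ge0.
  rewrite -/e -/r0; lra.
have ab : r0 <= 1 by lra.
have mm : Num.min (K r0) (K 1) <= x <= Num.max (K r0) (K 1).
  rewrite K1; apply/andP; split.
    by rewrite ge_min x1 orbT.
  by rewrite le_max Kr0.
have [r rI Kr] := IVT ab (@K_within r0 1 r00) mm.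
exists r; split => //; move: rI; rewrite in_itv /= => /andP[? ?]; lra.
Qed.

Lemma Rp_ex x : 1 <= x -> exists r, 1 <= r /\ K r = x.
Proof.
move=> x1.
have Kr0 : x <= K (2 * x).
  rewrite /K ler_pdivlMr; last lra.
  apply: le_trans (expR_ge1Dx _).
  have : 0 <= (2 * x - 1) ^+ 2 by apply: sqr_ge0.
  lra.
have ab : 1 <= 2 * x by lra.
have mm : Num.min (K 1) (K (2 * x)) <= x <= Num.max (K 1) (K (2 * x)).
  rewrite K1; apply/andP; split.
    by rewrite ge_min x1.
  by rewrite le_max Kr0 orbT.
have [r rI Kr] := IVT ab (@K_within 1 (2 * x) ltr01) mm.
exists r; split => //; move: rI; rewrite in_itv /= => /andP[? ?]; lra.
Qed.

Lemma Rm_spec x : 1 <= x -> 0 < Rm x <= 1 /\ K (Rm x) = x.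
Proof. by move=> /Rm_ex ex; apply: (xgetPex 1 ex). Qed.

Lemma Rp_spec x : 1 <= x -> 1 <= Rp x /\ K (Rp x) = x.
Proof. by move=> /Rp_ex ex; apply: (xgetPex 1 ex). Qed.

Lemma Rm_lt1 x : 1 < x -> Rm x < 1.
Proof.
move=> x1; have [/andP[r0 r1] Kr] := Rm_spec (ltW x1).
rewrite lt_neqAle r1 andbT; apply/eqP => e; move: Kr; rewrite e K1; lra.
Qed.

Lemma Rp_gt1 x : 1 < x -> 1 < Rp x.
Proof.
move=> x1; have [r1 Kr] := Rp_spec (ltW x1).
rewrite lt_neqAle r1 andbT; apply/eqP => e; move: Kr; rewrite -e K1; lra.
Qed.

Lemma Rm_small x : x < 1 -> Rm x = 1.
Proof.
move=> x1; apply: xgetPN => r [/andP[r0 _] Kr].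
have := K_ge1 r0; lra.
Qed.

Lemma Rp_small x : x < 1 -> Rp x = 1.
Proof.
move=> x1; apply: xgetPN => r [r1 Kr].
have := @K_ge1 r; lra.
Qed.

Lemma Rm_noninc : {homo (@Rm R) : s t /~ s <= t}.
Proof.
move=> t s st.
have [s1|s1] := ltP s 1.
  rewrite (Rm_small s1).
  have [t1|t1] := ltP t 1; first by rewrite (Rm_small t1).
  by case: (Rm_spec t1) => /andP[].
have [/andP[a0 a1] Ka] := Rm_spec s1.
have [/andP[b0 b1] Kb] := Rm_spec (le_trans s1 st).
rewrite leNgt; apply/negP => ab.
have := K_decr a0 ab b1; lra.
Qed.

Lemma Rp_ndecr : {homo (@Rp R) : s t / s <= t}.
Proof.
move=> s t st.
have [s1|s1] := ltP s 1.
  rewrite (Rp_small s1).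
  have [t1|t1] := ltP t 1; first by rewrite (Rp_small t1).
  by case: (Rp_spec t1).
have [a1 Ka] := Rp_spec s1.
have [b1 Kb] := Rp_spec (le_trans s1 st).
rewrite leNgt; apply/negP => ab.
have := K_incr b1 ab; lra.
Qed.


Lemma hdE (z : R) : -1 < z < 1 -> is_derive z 1
  (fun z : R => ln (1 + z) - ln (1 - z) - 2 * z)
  ((1 + z)^-1 - (1 - z)^-1 * (-1) - 2).
Proof.
move=> /andP[z1 z2].
have d1 : is_derive z 1 (@ln R \o (fun z : R => 1 + z)) ((1 + z)^-1 * 1).
  apply: is_derive1_comp; last first.
    have H := is_deriveD (is_derive_cst (1:R) z 1) (is_derive_id z 1).
    by rewrite add0r in H; exact: H.
  by apply: is_derive1_ln; lra.
have d2 : is_derive z 1 (@ln R \o (fun z : R => 1 - z)) ((1 - z)^-1 * (-1)).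
  apply: is_derive1_comp; last first.
    have H := is_deriveB (is_derive_cst (1:R) z 1) (is_derive_id z 1).
    by rewrite sub0r in H; exact: H.
  by apply: is_derive1_ln; lra.
have d3 : is_derive z 1 (fun z : R => 2 * z) 2.
  have H := is_deriveZ 2 (is_derive_id z 1).
  by rewrite /GRing.scale /= mulr1 in H; exact: H.
have := is_deriveB (is_deriveB d1 d2) d3.
by rewrite mulr1.
Qed.

Lemma atanh_ineq (w : R) : 0 < w < 1 -> 2 * w < ln (1 + w) - ln (1 - w).
Proof.
move=> /andP[w0 w1].
set h := fun z : R => ln (1 + z) - ln (1 - z) - 2 * z.
have cont : {within `[0, w], continuous h}.
  apply: derivable_within_continuous => z; rewrite in_itv /= => /andP[? ?].
  by apply: ex_derive; apply: hdE; apply/andP; split; lra.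
have Hd : forall z, z \in `]0, w[ -> is_derive z 1 h ((1 + z)^-1 - (1 - z)^-1 * (-1) - 2).
  move=> z; rewrite in_itv /= => /andP[? ?]; apply: hdE; apply/andP; split; lra.
have [c cI hc] := MVT w0 Hd cont.
move: cI; rewrite in_itv /= => /andP[c0 cw].
have h0 : h 0 = 0 by rewrite /h !addr0 subr0 ln1 mulr0 !subr0.
move: hc; rewrite h0 subr0 subr0 /h.
have : 0 < ((1 + c)^-1 - (1 - c)^-1 * -1 - 2) * w.
  apply: mulr_gt0 => //.
  rewrite (_ : _ - 2 = 2 * c ^+ 2 / ((1 + c) * (1 - c))); last first.
    by field; apply/andP; split; apply/eqP; lra.
  apply: divr_gt0; first by rewrite mulr_gt0 // exprn_gt0.
  by apply: mulr_gt0; lra.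
lra.
Qed.


Lemma part1 (x : R) : 1 < x -> 1 - Rm x ^+ 2 < Rp x ^+ 2 - 1.
Proof.
move=> x1.
have [/andP[a0 _] Ka] := Rm_spec (ltW x1).
have a1 := Rm_lt1 x1.
have [b1' Kb] := Rp_spec (ltW x1).
have b1 := Rp_gt1 x1.
set a := Rm x in a0 a1 Ka *; set b := Rp x in b1 b1' Kb *.
have fe : fL (a ^+ 2) = fL (b ^+ 2).
  have := congr1 (@ln R) (etrans Ka (esym Kb)).
  rewrite !lnK_E //; last lra.
  by move/(congr1 (fun z => z * 2)); rewrite !divfK.
set u := a ^+ 2 in fe *; set v := b ^+ 2 in fe *.
have u0 : 0 < u by rewrite exprn_gt0.
have u1 : u < 1 by rewrite /u expr_lt1 //; lra.
have v1 : 1 < v by rewrite /v expr_gt1 //; lra.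
rewrite ltNge; apply/negP => vle.
have H1 : fL v <= fL (2 - u) by apply: fL_ndecr; lra.
have H2 := @atanh_ineq (1 - u).
have : 0 < 1 - u < 1 by apply/andP; split; lra.
move/H2; rewrite (_ : 1 + (1 - u) = 2 - u); last by field.
rewrite (_ : 1 - (1 - u) = u); last by field.
move: H1 fe; rewrite /fL; lra.
Qed.

End P1.

Section P2.
Variable R : realType.
Import numFieldNormedType.Exports.

Lemma sin_lin (t T : R) : 0 <= t -> t <= T -> T <= pi / 2 -> t * cos T <= sin t.
Proof.
move=> t0 tT Tp.
have pi0 : 0 < pi :> R := @pi_gt0 R.
move: t0; rewrite le_eqVlt => /predU1P[<-|t0]; first by rewrite mul0r sin0.
have Hd : forall z, z \in `]0, t[ -> is_derive z 1 (@sin R) (cos z).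
  by move=> z _; apply: is_derive_sin.
have cont : {within `[0, t], continuous (@sin R)}.
  by apply: continuous_subspaceT; exact: continuous_sin.
have [xi xiI hxi] := MVT t0 Hd cont.
move: xiI; rewrite in_itv /= => /andP[xi0 xit].
rewrite sin0 subr0 subr0 in hxi; rewrite hxi mulrC ler_pM2r //.
rewrite leNgt; apply/negP; rewrite ltr_cos ?in_itv /=; try (apply/andP; split); try lra.
Qed.

Variable c : R.
Hypothesis c1 : 1 < c.

Definition al := asin c^-1.

Lemma cinv_I : -1 <= c^-1 <= 1.
Proof.
have c1x := c1.
have c0 : 0 < c by lra.
have : c^-1 < 1 by rewrite invf_lt1.
have : 0 < c^-1 by rewrite invr_gt0.
move=> ? ?; apply/andP; split; lra.
Qed.

Lemma sin_al : sin al = c^-1.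
Proof. by rewrite /al asinK // in_itv /= cinv_I. Qed.

Lemma al_bounds : 0 < al < pi / 2.
Proof.
have c1x := c1.
have c0 : 0 < c by lra.
have ci1 : c^-1 < 1 by rewrite invf_lt1.
have ci0 : 0 < c^-1 by rewrite invr_gt0.
have pi0 : 0 < pi :> R := @pi_gt0 R.
apply/andP; split; last by rewrite /al asin_ltpi2 //; apply/andP; split; lra.
have := @asin_geNpi2 R c^-1 cinv_I; have := @asin_lepi2 R c^-1 cinv_I.
rewrite -/al => h1 h2.
rewrite -(@ltr_sin R) ?in_itv /= ?sin0 ?sin_al //; try (apply/andP; split); lra.
Qed.

Lemma sin_ident (p : R) :
  c * sin p - 1 = 2 * c * sin ((p - al) / 2) * sin ((pi - al - p) / 2).
Proof.
have c1x := c1.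
set A := (p - al) / 2; set B := (pi - al - p) / 2.
have e1 : cos (A - B) = sin p.
  rewrite (_ : A - B = p - pi / 2); first by rewrite cosBpihalf.
  by rewrite /A /B; field.
have e2 : cos (A + B) = c^-1.
  rewrite (_ : A + B = pi / 2 - al); last by rewrite /A /B; field.
  by rewrite cosB cos_pihalf sin_pihalf mul0r add0r mul1r sin_al.
have : cos (A - B) - cos (A + B) = 2 * sin A * sin B.
  rewrite cosB cosD; ring.
rewrite e1 e2 => h.
have c0 : c != 0 by apply/eqP; lra.
rewrite (_ : 2 * c * sin A * sin B = c * (2 * sin A * sin B)); last by ring.
by rewrite -h; field.
Qed.

Lemma sin_lower (p : R) : al < p < pi - al ->
  (p - al) * (pi - al - p) / (2 * c) <= c * sin p - 1.
Proof.
have c1x := c1.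
move=> /andP[p1 p2].
have c0 : 0 < c by lra.
have /andP[a0 a1] := al_bounds.
have pi0 : 0 < pi :> R := @pi_gt0 R.
have cT : cos (pi / 2 - al) = c^-1.
  by rewrite cosB cos_pihalf sin_pihalf mul0r add0r mul1r sin_al.
have sA : (p - al) / 2 * c^-1 <= sin ((p - al) / 2).
  rewrite -cT; apply: sin_lin; lra.
have sB : (pi - al - p) / 2 * c^-1 <= sin ((pi - al - p) / 2).
  rewrite -cT; apply: sin_lin; lra.
rewrite sin_ident.
have h0 : 0 <= (p - al) / 2 * c^-1 by apply: mulr_ge0; [lra|rewrite invr_ge0; lra].
have h1 : 0 <= (pi - al - p) / 2 * c^-1 by apply: mulr_ge0; [lra|rewrite invr_ge0; lra].
have := ler_pM h0 h1 sA sB.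
have : (p - al) * (pi - al - p) / (2 * c) =
  2 * c * ((p - al) / 2 * c^-1 * ((pi - al - p) / 2 * c^-1)).
  by field; apply/eqP; lra.
move=> ->; rewrite -!mulrA => h; rewrite ler_pM2l; last lra.
by rewrite ler_pM2l.
Qed.


Definition qq (p : R) := (p - al) * (pi - al - p).

Lemma qq_gt0 p : al < p < pi - al -> 0 < qq p.
Proof. by move=> /andP[h1 h2]; rewrite /qq mulr_gt0 //; lra. Qed.

Lemma x_gt1 p : al < p < pi - al -> 1 < c * sin p.
Proof.
have c1x := c1.
move=> hp; have := sin_lower hp; have := qq_gt0 hp; rewrite /qq => h1 h2.
have : 0 < (p - al) * (pi - al - p) / (2 * c) by rewrite divr_gt0 //; lra.
lra.
Qed.

Lemma f2_le p : al < p < pi - al ->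
  (Rp (c * sin p) ^+ 2 - 1)^-1 <= c / Num.sqrt (qq p).
Proof.
have c1x := c1.
move=> hp.
have q0 := qq_gt0 hp.
have hx := sin_lower hp; rewrite -/(qq p) in hx.
set x := c * sin p in hx *.
have x1 : 1 < x by apply: x_gt1.
have xc : x <= c by rewrite /x ler_piMr ?sin_le1 //; lra.
have [_ Kb] := Rp_spec (ltW x1).
have b1 := Rp_gt1 x1.
set b := Rp x in Kb b1 *.
set v := b ^+ 2.
have v1 : 1 < v by rewrite /v expr_gt1 //; lra.
have lnx : ln x = fL v / 2 by rewrite -lnK_E ?Kb //; lra.
have lv : 1 - v^-1 <= ln v by apply: ln_ge_1inv; lra.
have lv' : v - 1 <= v * ln v.
  have := ler_wpM2l (ltW (lt_trans ltr01 v1)) lv.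
  by rewrite mulrBr mulr1 divff //; apply/eqP; lra.
have lx : 1 - x^-1 <= ln x by apply: ln_ge_1inv; lra.
have lx' : x - 1 <= x * ln x.
  have := ler_wpM2l (ltW (lt_trans ltr01 x1)) lx.
  by rewrite mulrBr mulr1 divff //; apply/eqP; lra.
have lx0 : 0 <= ln x by apply: ln_ge0; lra.
have fv0 : 0 <= fL v by apply: fL_ge0; lra.
have h1 : fL v <= (v - 1) ^+ 2.
  have e1 : fL v <= v * fL v by rewrite ler_peMl //; lra.
  have e2 : v * fL v = v ^+ 2 - v - v * ln v by rewrite /fL; ring.
  have e3 : (v - 1) ^+ 2 = v ^+ 2 - 2 * v + 1 by ring.
  rewrite e3; lra.
have h2 : x * ln x <= c * ln x by apply: ler_wpM2r.
have h3 : qq p / (2 * c) * 2 * c = qq p by field; apply/eqP; lra.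
have h4 : qq p <= (c * (v - 1)) ^+ 2.
  have : qq p <= c * (2 * c * ln x) by nra.
  move: h1; rewrite lnx; nra.
have sq : Num.sqrt (qq p) <= c * (v - 1).
  have := ler_wsqrtr h4; rewrite sqrtr_sqr ger0_norm //; apply: mulr_ge0; lra.
have s0 : 0 < Num.sqrt (qq p) by rewrite sqrtr_gt0.
rewrite -subr_ge0.
rewrite (_ : c / Num.sqrt (qq p) - (v - 1)^-1 =
  (c * (v - 1) - Num.sqrt (qq p)) / (Num.sqrt (qq p) * (v - 1))); last first.
  by field; apply/andP; split; apply/eqP; lra.
apply: divr_ge0; first lra.
apply: mulr_ge0; lra.
Qed.


Definition kk := 2 / (pi - 2 * al).
Definition uu (p : R) := kk * p - kk * (pi / 2).
Definition GG (p : R) := c * asin (uu p).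
Definition gg (p : R) := c / Num.sqrt (qq p).

Lemma kk_gt0 : 0 < kk.
Proof.
have c1x := c1.
have /andP[a0 a1] := al_bounds.
by rewrite /kk divr_gt0 //; lra.
Qed.

Lemma uu_in p : al < p < pi - al -> -1 < uu p < 1.
Proof.
have c1x := c1.
move=> /andP[p1 p2].
have /andP[a0 a1] := al_bounds.
have k0 := kk_gt0.
have ek : kk * (pi - 2 * al) = 2 by rewrite /kk divfK //; apply/eqP; lra.
rewrite /uu; apply/andP; split; nra.
Qed.

Lemma uu_sq p : 1 - uu p ^+ 2 = kk ^+ 2 * qq p.
Proof.
have c1x := c1.
have /andP[a0 a1] := al_bounds.
rewrite /uu /qq /kk; field; apply/eqP; lra.
Qed.

Lemma GG_derive p : al < p < pi - al -> is_derive p 1 GG (gg p).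
Proof.
have c1x := c1.
move=> hp.
have q0 := qq_gt0 hp.
have k0 := kk_gt0.
have du : is_derive p 1 uu kk.
  have H := is_deriveB (is_deriveZ kk (is_derive_id p 1)) (is_derive_cst (kk * (pi / 2)) p 1).
  rewrite /GRing.scale /= mulr1 subr0 in H; exact: H.
have da : is_derive p 1 (@asin R \o uu) ((Num.sqrt (1 - uu p ^+ 2))^-1 * kk).
  exact: (is_derive1_comp (is_derive1_asin (uu_in hp)) du).
have H := is_deriveZ c da.
rewrite (_ : GG = c \*: (@asin R \o uu)) //.
apply: (is_derive_eq H).
rewrite [LHS]/(_ *: _) /=.
rewrite /gg uu_sq sqrtrM ?sqr_ge0 // sqrtr_sqr ger0_norm; last lra.
have s0 : 0 < Num.sqrt (qq p) by rewrite sqrtr_gt0.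
field; apply/andP; split; apply/eqP; lra.
Qed.

Lemma gg_cont p : al < p < pi - al -> {for p, continuous gg}.
Proof.
move=> hp; have q0 := qq_gt0 hp.
have -> : gg = (fun=> c) \* (fun p => (Num.sqrt (qq p))^-1) by [].
apply: continuousM; first exact: cst_continuous.
apply: continuousV; first by rewrite gt_eqF // sqrtr_gt0.
apply: (@continuous_comp _ _ _ qq (@Num.sqrt R)); last exact: sqrt_continuous.
apply: continuousM.
  by apply: continuousB; [exact: cvg_id|exact: cst_continuous].
by apply: continuousB; [exact: cst_continuous|exact: cvg_id].
Qed.

Lemma GG_bound p1 p2 : al < p1 < pi - al -> al < p2 < pi - al ->
  GG p2 - GG p1 <= c * pi.
Proof.
have c1x := c1.
have pi0 : 0 < pi :> R := @pi_gt0 R.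
move=> h1 h2.
have /andP[u1 u1'] := uu_in h1; have /andP[u2 u2'] := uu_in h2.
have i1 : -1 <= uu p1 <= 1 by apply/andP; split; lra.
have i2 : -1 <= uu p2 <= 1 by apply/andP; split; lra.
have := asin_geNpi2 i1; have := asin_lepi2 i2.
rewrite /GG -mulrBr ler_pM2l; last lra.
lra.
Qed.

Lemma GG_cont p : al < p < pi - al -> {for p, continuous GG}.
Proof.
move=> hp; apply/differentiable_continuous/derivable1_diffP.
exact: (@ex_derive _ _ _ _ _ _ _ (GG_derive hp)).
Qed.

Lemma int_gg x y : al < x -> x < y -> y < pi - al ->
  (\int[lebesgue_measure]_(p in `[x, y]) (gg p)%:E = (GG y)%:E - (GG x)%:E)%E.
Proof.
move=> ax xy yb.
have inI z : x <= z -> z <= y -> al < z < pi - al.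
  by move=> ? ?; apply/andP; split; lra.
apply: continuous_FTC2 => //.
- apply: continuous_in_subspaceT => z; rewrite inE /= in_itv /= => /andP[? ?].
  by apply: gg_cont; apply: inI.
- split.
  + move=> z; rewrite in_itv /= => /andP[? ?].
    by apply: ex_derive; apply: GG_derive; apply: inI; lra.
  + by apply: cvg_at_right_filter; apply: GG_cont; apply: inI; lra.
  + by apply: cvg_at_left_filter; apply: GG_cont; apply: inI; lra.
- move=> z; rewrite in_itv /= => /andP[? ?].
  have H := GG_derive (inI z (ltW _) (ltW _)).
  by rewrite derive1E; rewrite (@derive_val _ _ _ _ _ _ _ (H _ _)).
Qed.

End P2.

Section P3.
Variable R : realType.
Import numFieldNormedType.Exports.
Notation mu := (@lebesgue_measure R).

Lemma Rm_pos (s : R) : 0 < Rm s.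
Proof.
have [s1|s1] := ltP s 1; first by rewrite Rm_small // ltr01.
by case: (Rm_spec s1) => /andP[].
Qed.

Lemma Rp_ge1 (s : R) : 1 <= Rp s.
Proof.
have [s1|s1] := ltP s 1; first by rewrite Rp_small.
by case: (Rp_spec s1).
Qed.

Lemma H1_nd : {homo (fun s : R => 1 - Rm s ^+ 2) : s t / s <= t}.
Proof.
move=> s t st; rewrite lerD2l lerN2.
rewrite ler_pXn2r ?nnegrE ?(ltW (Rm_pos _)) //.
exact: Rm_noninc.
Qed.

Lemma H2_nd : {homo (fun s : R => Rp s ^+ 2 - 1) : s t / s <= t}.
Proof.
move=> s t st; rewrite lerD2r.
have h0 := Rp_ge1 s; have h1 := Rp_ge1 t.
rewrite ler_pXn2r ?nnegrE //; try lra.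
exact: Rp_ndecr.
Qed.

Lemma meas_csin (H : R -> R) (c : R) (D : set R) :
  {homo H : s t / s <= t} -> measurable D ->
  measurable_fun D (fun p => H (c * sin p)).
Proof.
move=> Hnd mD.
apply: (@measurableT_comp _ _ _ _ _ _ H _ (fun p => c * sin p)).
  exact: nondecreasing_measurable.
apply: measurable_funS (measurableT) (subsetT _) _.
apply: continuous_measurable_fun => p.
apply: continuousM; first exact: cst_continuous.
exact: continuous_sin.
Qed.

Lemma meas_inv (D : set R) (h : R -> R) : measurable D ->
  measurable_fun D h -> (forall x, D x -> 0 < h x) ->
  measurable_fun D (fun x => (h x)^-1).
Proof.
move=> mD mh hpos.
apply: (@measurable_comp _ _ _ _ _ _ [set x : R | 0 < x] (@GRing.inv R) D h).
- by rewrite (_ : [set x : R | 0 < x] = `]0, +oo[%classic);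
    [exact: measurable_itv | apply/seteqP; split => x /=; rewrite in_itv /= andbT].
- by move=> _ [x Dx <-]; apply: hpos.
- apply: open_continuous_measurable_fun.
    by rewrite (_ : [set x : R | 0 < x] = [set x : R^o | x \in `]0, +oo[]);
      [exact: interval_open | apply/seteqP; split => x /=; rewrite in_itv /= andbT].
  move=> x; rewrite inE /= => x0.
  by apply: continuousV; [rewrite gt_eqF | exact: cvg_id].
- exact: mh.
Qed.


Lemma improper_le (a b M : R) (h : R -> R) : a < b ->
  measurable_fun `]a, b[ h -> (forall x, a < x < b -> 0 <= h x) ->
  (forall x y, a < x -> x < y -> y < b ->
     (\int[mu]_(z in `[x, y]) (h z)%:E <= M%:E)%E) ->
  (\int[mu]_(z in `]a, b[) (h z)%:E <= M%:E)%E.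
Proof.
move=> ab mh h0 hb.
pose e (n : nat) : R := (b - a) / n.+3%:R.
have e0 n : 0 < e n by rewrite /e divr_gt0 //; lra.
have e3 n : e n * 3 <= b - a.
  have k3 : 3 <= n.+3%:R :> R by rewrite ler_nat.
  rewrite /e mulrAC ler_pdivrMr; last lra.
  nra.
have eD n m : (n <= m)%N -> e m <= e n.
  move=> nm; rewrite /e ler_pM2l ?subr_gt0 // lef_pV2 ?posrE ?ltr0n // ler_nat.
  by rewrite ltnS ltnS ltnS.
pose F (n : nat) := `[a + e n, b - e n]%classic.
have FD n : F n `<=` `]a, b[%classic.
  move=> z; rewrite /F /= !in_itv /= => /andP[z1 z2].
  have := e0 n; move=> ?; apply/andP; split; lra.
have nndF : nondecreasing_seq F.
  move=> n m nm; rewrite /F; apply/subsetPset => z /=; rewrite !in_itv /=.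
  have := eD _ _ nm => hh /andP[z1 z2]; apply/andP; split; lra.
have mF n : measurable (F n) by exact: measurable_itv.
have mf n : measurable_fun (F n) (EFin \o h).
  apply/measurable_EFinP; exact: (measurable_funS (measurable_itv _) (FD n) mh).
have f0 n x : F n x -> (0 <= (EFin \o h) x)%E.
  by move=> /FD /= xI; rewrite lee_fin h0 //; move: xI; rewrite in_itv.
have H : (\int[mu]_(x in F i) (EFin \o h) x @[i --> \oo] -->
    \int[mu]_(x in \bigcup_i F i) (EFin \o h) x)%E.
  exact: ge0_nondecreasing_set_cvg_integral.
have UF : \bigcup_n F n = `]a, b[%classic.
  apply/seteqP; split; first by move=> z [n _ /FD].
  move=> z; rewrite /= in_itv /= => /andP[z1 z2].
  pose m := Num.min (z - a) (b - z).
  have m0 : 0 < m by rewrite /m lt_min; apply/andP; split; lra.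
  pose n := Num.trunc ((b - a) / m).
  exists n => //; rewrite /F /= in_itv /=.
  have : (b - a) / m < n.+1%:R by apply: truncnS_gt.
  have : n.+1%:R < n.+3%:R :> R by rewrite ltr_nat.
  move=> h1 h2.
  have h3 : (b - a) / m < n.+3%:R by lra.
  have h4 : e n < m.
    rewrite /e ltr_pdivrMr ?ltr0n // mulrC -ltr_pdivrMr //.
  have : m <= z - a by rewrite /m ge_min lexx.
  have : m <= b - z by rewrite /m ge_min lexx orbT.
  move=> ? ?; apply/andP; split; lra.
rewrite -UF -(cvg_lim _ H) //.
apply: lime_le; first by apply/cvg_ex; eexists; exact: H.
apply: nearW => n; rewrite /F.
have := e3 n; have := e0 n => ? ?.
apply: hb; lra.
Qed.

End P3.

Section P4.
Variable R : realType.
Import numFieldNormedType.Exports.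
Notation mu := (@lebesgue_measure R).

Lemma part2 (c psi1 psi2 : R) : 1 < c ->
     asin (c^-1) <= psi1 -> psi1 < psi2 -> psi2 <= pi - asin (c^-1) ->
     (\int[lebesgue_measure]_(psi in `[psi1, psi2])
        ((1 - (Rm (c * sin psi)) ^+ 2)^-1)%:E >
      \int[lebesgue_measure]_(psi in `[psi1, psi2])
        (((Rp (c * sin psi)) ^+ 2 - 1)^-1)%:E)%E.
Proof.
move=> c1 h1 h12 h2.
have c1x := c1.
rewrite -/(al c) in h1 h2.
pose f1 p := (1 - Rm (c * sin p) ^+ 2)^-1.
pose f2 p := (Rp (c * sin p) ^+ 2 - 1)^-1.
pose D := `]psi1, psi2[%classic.
have mD : measurable D by exact: measurable_itv.
have inD p : D p -> al c < p < pi - al c.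
  rewrite /D /= in_itv /= => /andP[? ?]; apply/andP; split; lra.
have pos1 p : D p -> 0 < 1 - Rm (c * sin p) ^+ 2.
  move=> /inD hp; have x1 := x_gt1 c1 hp.
  have r0 := Rm_pos (c * sin p); have r1 := Rm_lt1 x1.
  rewrite subr_gt0 expr_lt1 //; lra.
have pos2 p : D p -> 0 < Rp (c * sin p) ^+ 2 - 1.
  move=> /inD hp; have x1 := x_gt1 c1 hp.
  have r1 := Rp_gt1 x1.
  rewrite subr_gt0 expr_gt1 //; lra.
have lt12 p : D p -> f2 p < f1 p.
  move=> Dp; have q1 := pos1 p Dp; have q2 := pos2 p Dp.
  rewrite /f1 /f2 ltf_pV2 ?posrE //.
  exact: part1 (x_gt1 c1 (inD _ Dp)).
have mf1 : measurable_fun D f1.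
  apply: (@meas_inv R D (fun p => 1 - Rm (c * sin p) ^+ 2) mD _ pos1).
  exact: (@meas_csin R (fun s => 1 - Rm s ^+ 2) c D (@H1_nd R) mD).
have mf2 : measurable_fun D f2.
  apply: (@meas_inv R D (fun p => Rp (c * sin p) ^+ 2 - 1) mD _ pos2).
  exact: (@meas_csin R (fun s => Rp s ^+ 2 - 1) c D (@H2_nd R) mD).
rewrite (@integral_itv_bndoo R psi1 psi2 (fun p => (f1 p)%:E) true false);
  last exact/measurable_EFinP.
rewrite (@integral_itv_bndoo R psi1 psi2 (fun p => (f2 p)%:E) true false);
  last exact/measurable_EFinP.
rewrite -/D -/f1 -/f2.
have f20 p : D p -> 0 <= f2 p by move=> /pos2 ?; rewrite invr_ge0 ltW.
have d12 p : D p -> 0 <= f1 p - f2 p by move=> /lt12 ?; rewrite subr_ge0 ltW.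
have mf12 : measurable_fun D (fun p => f1 p - f2 p) by exact: measurable_funB.
have fin2 : (\int[mu]_(p in D) (f2 p)%:E)%E \is a fin_num.
  rewrite ge0_fin_numE; last by apply: integral_ge0 => p Dp; rewrite lee_fin; apply: f20.
  apply: (@le_lt_trans _ _ (c * pi)%:E); last exact: ltry.
  apply: improper_le => //.
  move=> x y px xy yp.
  have sub : `[x, y] `<=` D.
    by move=> z; rewrite /D /= !in_itv /= => /andP[? ?]; apply/andP; split; lra.
  have xI : al c < x < pi - al c by apply/andP; split; lra.
  have yI : al c < y < pi - al c by apply/andP; split; lra.
  apply: (@le_trans _ _ (\int[mu]_(z in `[x, y]) (gg c z)%:E)%E).
    apply: ge0_le_integral => //.
    - by move=> z /sub ?; rewrite lee_fin; apply: f20.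
    - by apply/measurable_EFinP; exact: (measurable_funS mD sub mf2).
    - apply/measurable_EFinP.
      have sub' : `[x, y] `<=` `]al c, pi - al c[.
        by move=> z; rewrite /= !in_itv /= => /andP[? ?]; apply/andP; split; lra.
      apply: (measurable_funS (measurable_itv _) sub').
      apply: open_continuous_measurable_fun; first exact: interval_open.
      by move=> z; rewrite inE /= in_itv /= => ?; apply: gg_cont.
    - move=> z /sub Dz; rewrite lee_fin; exact: f2_le (inD _ Dz).
  rewrite int_gg //; [|lra|lra].
  by rewrite -EFinB lee_fin GG_bound.
have pos : (0 < \int[mu]_(p in D) (f1 p - f2 p)%:E)%E.
  rewrite lt_neqAle integral_ge0 ?andbT; last by move=> p Dp; rewrite lee_fin; apply: d12.
  apply/eqP => /esym H0.
  have : ae_eq mu D (fun p => (f1 p - f2 p)%:E) (cst 0%E).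
    apply/ae_eq_integral_abs => //; first exact/measurable_EFinP.
    rewrite -H0; apply: eq_integral => p /set_mem Dp.
    by rewrite gee0_abs // lee_fin d12.
  case=> N [mN N0 sub].
  have DN : D `<=` N.
    move=> p Dp; apply: sub => /= H; have := H Dp.
    move=> [] /eqP; rewrite subr_eq0 => /eqP e.
    by have := lt12 p Dp; rewrite e ltxx.
  have : mu D = 0%E.
    apply/eqP; rewrite eq_le measure_ge0 andbT.
    apply: (le_trans (le_measure mu (mem_set mD) (mem_set mN) DN)).
    by move: N0 => /eqP; rewrite eq_le => /andP[].

  rewrite /D lebesgue_measure_itv /= lte_fin h12 -EFinD => /eqP.
  rewrite eqe; apply/negP; rewrite gt_eqF // subr_gt0 //.
rewrite (_ : (\int[mu]_(p in D) (f1 p)%:E)%E =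
  (\int[mu]_(p in D) (f2 p)%:E + \int[mu]_(p in D) (f1 p - f2 p)%:E)%E).
  by rewrite lteDl.
rewrite -ge0_integralD //.
all: try exact/measurable_EFinP.
all: try (by move=> p Dp; rewrite lee_fin; apply: f20).
all: try (by move=> p Dp; rewrite lee_fin; apply: d12).
by apply: eq_integral => p _; rewrite -EFinD; congr EFin; ring.
Qed.

End P4.


Unset Implicit Arguments. Set Strict Implicit.

Theorem mainTheorem7 (R : realType) :
  (forall x : R, 1 < x -> 1 - (Rm x) ^+ 2 < (Rp x) ^+ 2 - 1) /\
  (forall c psi1 psi2 : R, 1 < c ->
     asin (c^-1) <= psi1 -> psi1 < psi2 -> psi2 <= pi - asin (c^-1) ->
     (\int[lebesgue_measure]_(psi in `[psi1, psi2])
        ((1 - (Rm (c * sin psi)) ^+ 2)^-1)%:E >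
      \int[lebesgue_measure]_(psi in `[psi1, psi2])
        (((Rp (c * sin psi)) ^+ 2 - 1)^-1)%:E)%E).
Proof.
split.
- by move=> x x1; exact: part1.
- by move=> c psi1 psi2 c1 h1 h12 h2; exact: part2.
Qed.
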